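(* Let $\mathscr{C}=\left\{\sum_{i=1}^{\infty} t_i 3^{-i} : t_i\in\{0,2\}\right\}$ be the middle-third Cantor set, and for an integer $m\geq 1$ let $\mathscr{C}^{(m)}=\{x^m : x\in\mathscr{C}\}$. Let $t_m=2\cdot\left\lceil \left(\tfrac{3}{2}\right)^{m-1}\right\rceil$. Then the $t_m$-fold sumset \[\underbrace{\mathscr{C}^{(m)}+\mathscr{C}^{(m)}+\cdots+\mathscr{C}^{(m)}}_{t_m\text{ times}}=\{y_1+\cdots+y_{t_m} : y_j\in\mathscr{C}^{(m)}\}\] contains the interval \[I=\left[(m+1)\left(\tfrac{2}{3}\right)^{m}+(m-1),\ (m-1)\left(\tfrac{2}{3}\right)^{m}+(m+1)\right],\] which has Lebesgue measure $2\left(1-\left(\tfrac{2}{3}\right)^{m}\right)$. *)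

(* Defs.v *)
From Stdlib Require Import Reals List ZArith.
Open Scope R_scope.

(* The middle-third Cantor set: x = sum_{i>=1} t_i 3^{-i}, t_i in {0,2}.
   Here digit d i corresponds to t_{i+1}. *)
Definition cantor (x : R) : Prop :=
  exists d : nat -> R,
    (forall i, d i = 0 \/ d i = 2) /\
    Un_cv (fun n => sum_f_R0 (fun i => d i / 3 ^ (S i)) n) x.

Definition cantor_pow (m : nat) (y : R) : Prop :=
  exists x, cantor x /\ y = x ^ m.

Definition sumset (k : nat) (S : R -> Prop) (z : R) : Prop :=
  exists ys : list R, length ys = k /\ Forall S ys /\ fold_right Rplus 0 ys = z.

Definition ceilR (x : R) : Z := (- Int_part (- x))%Z.

Definition t_m (m : nat) : nat := 2 * Z.to_nat (ceilR ((3/2) ^ (m - 1))).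

(* Main.v *)
Require Import Defs.
From Stdlib Require Import Reals List ZArith.
From Stdlib Require Import Lra Lia Psatz Classical ClassicalEpsilon.
Open Scope R_scope.

Fixpoint psum (d : nat -> R) (k : nat) : R :=
  match k with O => 0 | S k => psum d k + d k / 3 ^ (S k) end.

Fixpoint sumn (f : nat -> R) (n : nat) : R :=
  match n with O => 0 | S n => sumn f n + f n end.

Definition digits (d : nat -> R) := forall i, d i = 0 \/ d i = 2.

Lemma pow3_pos k : 0 < 3 ^ k.
Proof. apply pow_lt; lra. Qed.

Lemma inv3_pos k : 0 < / 3 ^ k.
Proof. apply Rinv_0_lt_compat, pow3_pos. Qed.

Lemma inv3_S k : / 3 ^ (S k) = / 3 ^ k / 3.
Proof. simpl. field. apply Rgt_not_eq, pow3_pos. Qed.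

Lemma psum_ext d d' k : (forall i, (i < k)%nat -> d i = d' i) -> psum d k = psum d' k.
Proof.
  induction k; intros H; cbn [psum]; [reflexivity|].
  rewrite IHk by (intros; apply H; lia). rewrite H by lia. reflexivity.
Qed.

Lemma term_nonneg d (Hd : digits d) k : 0 <= d k / 3 ^ S k.
Proof.
  unfold Rdiv; apply Rmult_le_pos; [destruct (Hd k); lra | left; apply inv3_pos].
Qed.

Lemma psum_mono d (Hd : digits d) k k' : (k <= k')%nat -> psum d k <= psum d k'.
Proof.
  induction 1; [lra|]. cbn [psum]. pose proof (term_nonneg d Hd m). lra.
Qed.

Lemma psum_h1 d (Hd : digits d) k : psum d (S k) + / 3 ^ (S k) <= psum d k + / 3 ^ k.
Proof.
  cbn [psum]. unfold Rdiv. rewrite inv3_S. pose proof (inv3_pos k).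
  destruct (Hd k) as [E|E]; rewrite E; lra.
Qed.

Lemma psum_h_mono d (Hd : digits d) k k' : (k <= k')%nat ->
  psum d k' + / 3 ^ k' <= psum d k + / 3 ^ k.
Proof.
  induction 1; [lra|]. pose proof (psum_h1 d Hd m). lra.
Qed.

Lemma psum_le1 d (Hd : digits d) k : psum d k + / 3 ^ k <= 1.
Proof.
  pose proof (psum_h_mono d Hd 0 k ltac:(lia)). simpl in H. rewrite Rinv_1 in H. lra.
Qed.

Lemma psum_ge23 d (Hd : digits d) (H0 : d 0%nat = 2) k : (1 <= k)%nat -> 2/3 <= psum d k.
Proof.
  intros Hk. pose proof (psum_mono d Hd 1 k Hk). cbn [psum] in H. rewrite H0 in H.
  simpl in H. lra.
Qed.

Lemma pd_lower m b e : 0 <= b -> 0 <= e -> INR (S m) * e * b ^ m <= (b+e)^(S m) - b^(S m).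
Proof.
  intros Hb He. induction m.
  - simpl. lra.
  - replace ((b+e)^(S (S m))) with ((b+e) * (b+e)^(S m)) by reflexivity.
    replace (b^(S (S m))) with (b * b^(S m)) by reflexivity.
    replace (b^(S m)) with (b * b^m) in * by reflexivity.
    rewrite S_INR.
    assert (P : 0 <= b ^ m) by (apply pow_le; lra).
    assert (Q : 0 <= INR (S m)) by apply pos_INR.
    assert (H1 : (b+e) * (INR (S m) * e * b ^ m) <= (b+e) * ((b + e) ^ S m - b * b ^ m))
      by (apply Rmult_le_compat_l; lra).
    assert (H2 : b * (INR (S m) * e * b ^ m) <= (b+e) * (INR (S m) * e * b ^ m))
      by (apply Rmult_le_compat_r; [apply Rmult_le_pos; [apply Rmult_le_pos|]|]; lra).
    nra.
Qed.

Lemma pd_upper m b e : 0 <= b -> 0 <= e -> b + e <= 1 -> (b+e)^m - b^m <= INR m * e.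
Proof.
  intros Hb He H1. induction m.
  - simpl. lra.
  - replace ((b+e)^(S m)) with ((b+e) * (b+e)^m) by reflexivity.
    replace (b^(S m)) with (b * b^m) by reflexivity.
    rewrite S_INR.
    assert (P : b ^ m <= (b+e)^m) by (apply pow_incr; lra).
    assert (P2 : (b+e) ^ m <= 1) by (rewrite <- (pow1 m); apply pow_incr; lra).
    assert (P3 : 0 <= b ^ m) by (apply pow_le; lra).
    assert (H2 : (b+e) * ((b+e)^m - b^m) <= 1 * ((b+e)^m - b^m))
      by (apply Rmult_le_compat_r; lra).
    nra.
Qed.

Lemma sumn_ext n f g : (forall j, (j < n)%nat -> f j = g j) -> sumn f n = sumn g n.
Proof.
  induction n; intros H; simpl; [reflexivity|]. rewrite IHn by (intros; apply H; lia).
  rewrite H by lia. reflexivity.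
Qed.

Lemma sumn_const n c : sumn (fun _ => c) n = INR n * c.
Proof. induction n; simpl sumn; [simpl; ring|]. rewrite IHn, S_INR. ring. Qed.

Lemma sumn_le n f g : (forall j, (j < n)%nat -> f j <= g j) -> sumn f n <= sumn g n.
Proof.
  induction n; intros H; simpl; [lra|].
  pose proof (IHn ltac:(intros; apply H; lia)). pose proof (H n ltac:(lia)). lra.
Qed.

Lemma sumn_minus n f g : sumn (fun j => f j - g j) n = sumn f n - sumn g n.
Proof. induction n; simpl; [ring|]. rewrite IHn. ring. Qed.

Lemma sumn_upd n p f g : (p < n)%nat -> (forall j, (j < n)%nat -> j <> p -> g j = f j) ->
  sumn g n = sumn f n - f p + g p.
Proof.
  induction n; intros Hp H; [lia|]. simpl.
  destruct (Nat.eq_dec p n) as [->|Hne].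
  - rewrite (sumn_ext n g f) by (intros; apply H; lia). ring.
  - rewrite IHn by (try lia; intros; apply H; lia). rewrite (H n) by lia. ring.
Qed.

Lemma sumn_lower n p g c : (p < n)%nat -> (forall j, (j < n)%nat -> j <> p -> c <= g j) ->
  (INR n - 1) * c + g p <= sumn g n.
Proof.
  induction n; intros Hp H; [lia|]. simpl sumn. rewrite S_INR.
  destruct (Nat.eq_dec p n) as [->|Hne].
  - pose proof (sumn_le n (fun _ => c) g ltac:(intros; apply H; lia)).
    rewrite sumn_const in H0. lra.
  - pose proof (IHn ltac:(lia) ltac:(intros; apply H; lia)). pose proof (H n ltac:(lia) ltac:(lia)).
    lra.
Qed.

Lemma fold_add l a : fold_right Rplus a l = fold_right Rplus 0 l + a.
Proof. induction l; simpl; [ring|]. rewrite IHl. ring. Qed.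

Lemma fold_sumn f n : fold_right Rplus 0 (map f (seq 0 n)) = sumn f n.
Proof.
  induction n; [reflexivity|]. rewrite seq_S, map_app, fold_right_app. simpl.
  rewrite fold_add, IHn. ring.
Qed.
Definition lo m (D : nat -> nat -> R) (lev : nat -> nat) n :=
  sumn (fun j => psum (D j) (lev j) ^ m) n.
Definition hi m (D : nat -> nat -> R) (lev : nat -> nat) n :=
  sumn (fun j => (psum (D j) (lev j) + / 3 ^ (lev j)) ^ m) n.
Definition good (D : nat -> nat -> R) := (forall j, digits (D j)) /\ (forall j, D j 0%nat = 2).
Definition upd (D : nat -> nat -> R) p K (e : R) : nat -> nat -> R :=
  fun j i => if andb (Nat.eqb j p) (Nat.eqb i K) then e else D j i.

Lemma upd_good D p K e : good D -> (1 <= K)%nat -> (e = 0 \/ e = 2) -> good (upd D p K e).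
Proof.
  intros [H1 H2] HK He. split.
  - intros j i. unfold upd. destruct (andb _ _); [auto | apply H1].
  - intros j. unfold upd. destruct (Nat.eqb_spec 0 K); [lia|]. rewrite Bool.andb_false_r. auto.
Qed.

Lemma sub (m' n : nat) (D : nat->nat->R) lev lev' p K z :
  1 <= (INR n - 1) * (2/3)^m' ->
  good D -> (1 <= K)%nat ->
  (forall j, (j < n)%nat -> lev j = K \/ lev j = S K) ->
  (p < n)%nat -> lev p = K -> lev' p = S K -> (forall j, j <> p -> lev' j = lev j) ->
  lo (S m') D lev n <= z <= hi (S m') D lev n ->
  exists e, (e = 0 \/ e = 2) /\
    lo (S m') (upd D p K e) lev' n <= z <= hi (S m') (upd D p K e) lev' n.
Proof.
  intros Hn [Hd H0] HK Hlev Hp HlevP Hlev'P Hlev' Hz.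
  set (m := S m'). change (S m') with m in Hz.
  assert (Uo : forall j e, j <> p -> psum (upd D p K e j) (lev' j) = psum (D j) (lev j)).
  { intros j e Hj. rewrite Hlev' by auto. apply psum_ext. intros i _. unfold upd.
    destruct (Nat.eqb_spec j p); [contradiction|reflexivity]. }
  assert (Up : forall e, psum (upd D p K e p) (lev' p) = psum (D p) K + e / 3 ^ (S K)).
  { intros e. rewrite Hlev'P. cbn [psum]. f_equal.
    - apply psum_ext. intros i Hi. unfold upd. rewrite Nat.eqb_refl.
      destruct (Nat.eqb_spec i K); [lia|reflexivity].
    - unfold upd. rewrite !Nat.eqb_refl. reflexivity. }
  set (a := psum (D p) K). set (h := / 3 ^ K).
  assert (Ha : 2/3 <= a) by (apply psum_ge23; auto).
  assert (Hah : a + h <= 1) by (apply psum_le1; auto).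
  assert (Hh : 0 < h) by apply inv3_pos.
  assert (HS : / 3 ^ (S K) = h / 3) by apply inv3_S.
  set (c := INR m * (h/3) * (2/3)^m').
  set (g := fun j => (psum (D j) (lev j) + / 3 ^ (lev j)) ^ m - psum (D j) (lev j) ^ m).
  assert (Hg : forall j, (j < n)%nat -> j <> p -> c <= g j).
  { intros j Hj Hjp. unfold g, c, m.
    set (b := psum (D j) (lev j)). set (dl := / 3 ^ lev j).
    assert (Hb : 2/3 <= b) by (apply psum_ge23; auto; destruct (Hlev j Hj); lia).
    assert (Hdl : h / 3 <= dl).
    { unfold dl. destruct (Hlev j Hj) as [E|E]; rewrite E; [fold h; lra| rewrite HS; lra]. }
    pose proof (pd_lower m' b dl ltac:(lra) ltac:(lra)).
    assert (Hbm : (2/3)^m' <= b ^ m') by (apply pow_incr; lra).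
    assert (0 <= (2/3)^m') by (apply pow_le; lra).
    pose proof (pos_INR (S m')).
    assert (INR (S m') * (h / 3) * (2 / 3) ^ m' <= INR (S m') * dl * b ^ m').
    { apply Rmult_le_compat; try apply Rmult_le_compat_l; try apply Rmult_le_pos; lra. }
    lra. }
  pose proof (sumn_lower n p g c Hp Hg) as HL.
  assert (Hgp : g p = (a + h)^m - a^m) by (unfold g; rewrite HlevP; reflexivity).
  assert (Hsum : sumn g n = hi m D lev n - lo m D lev n) by (unfold g, hi, lo; apply sumn_minus).
  assert (Hgap : (a + 2*(h/3))^m - (a + h/3)^m <= INR m * (h/3)).
  { replace (a + 2*(h/3)) with ((a + h/3) + h/3) by ring. apply pd_upper; lra. }
  assert (Hc : INR m * (h/3) <= (INR n - 1) * c).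
  { unfold c. pose proof (pos_INR m).
    replace ((INR n - 1) * (INR m * (h / 3) * (2 / 3) ^ m'))
      with ((INR m * (h/3)) * ((INR n - 1) * (2/3)^m')) by ring.
    rewrite <- (Rmult_1_r (INR m * (h/3))) at 1.
    apply Rmult_le_compat_l; [apply Rmult_le_pos|]; lra. }
  assert (HloE : forall e, lo m (upd D p K e) lev' n =
     lo m D lev n - a ^ m + (a + e / 3 ^ (S K)) ^ m).
  { intros e. unfold lo. rewrite (sumn_upd n p (fun j => psum (D j) (lev j) ^ m) _ Hp).
    - cbv beta. rewrite Up, HlevP. reflexivity.
    - intros j _ Hj. simpl. rewrite Uo by auto. reflexivity. }
  assert (HhiE : forall e, hi m (upd D p K e) lev' n =
     hi m D lev n - (a + h) ^ m + (a + e / 3 ^ (S K) + h/3) ^ m).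
  { intros e. unfold hi.
    rewrite (sumn_upd n p (fun j => (psum (D j) (lev j) + / 3 ^ (lev j)) ^ m) _ Hp).
    - cbv beta. rewrite Up, HlevP, Hlev'P, HS. reflexivity.
    - intros j _ Hj. simpl. rewrite Uo by auto. rewrite Hlev' by auto. reflexivity. }
  destruct (Rle_dec z (hi m (upd D p K 0) lev' n)) as [Hle|Hgt].
  - exists 0. split; [auto|]. rewrite HloE.
    assert (E0: a + 0 / 3 ^ S K = a) by (unfold Rdiv; ring). rewrite E0. split; lra.
  - exists 2. split; [auto|]. rewrite HhiE in Hgt |- *. rewrite HloE.
    assert (E0: a + 0 / 3 ^ S K = a) by (unfold Rdiv; ring). rewrite E0 in Hgt.
    assert (E2: a + 2 / 3 ^ S K = a + 2 * (h/3)) by (rewrite <- HS; unfold Rdiv; ring). rewrite E2.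
    replace (a + 2 * (h / 3) + h / 3) with (a + h) by field.
    apply Rnot_le_lt in Hgt. split; lra.
Qed.

Definition levp K p := fun j => if Nat.ltb j p then S K else K.

Lemma stepP m' n D K z : 1 <= (INR n - 1) * (2/3)^m' -> good D -> (1 <= K)%nat ->
  lo (S m') D (fun _ => K) n <= z <= hi (S m') D (fun _ => K) n ->
  forall p, (p <= n)%nat -> exists D', good D' /\ (forall j i, i <> K -> D' j i = D j i) /\
    lo (S m') D' (levp K p) n <= z <= hi (S m') D' (levp K p) n.
Proof.
  intros Hn HD HK Hz p. induction p as [|p IH]; intros Hp.
  - exists D. split; [exact HD|]. split; [auto|]. exact Hz.
  - destruct (IH ltac:(lia)) as [D1 [HD1 [Hag1 Hz1]]].
    destruct (sub m' n D1 (levp K p) (levp K (S p)) p K z Hn HD1 HK) as [e [He Hz2]].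
    + intros j _. unfold levp. destruct (Nat.ltb j p); auto.
    + lia.
    + unfold levp. rewrite Nat.ltb_irrefl. reflexivity.
    + unfold levp. destruct (Nat.ltb_spec p (S p)); [reflexivity|lia].
    + intros j Hj. unfold levp. destruct (Nat.ltb_spec j (S p)); destruct (Nat.ltb_spec j p);
        try reflexivity; lia.
    + exact Hz1.
    + exists (upd D1 p K e). split; [apply upd_good; auto|]. split; [|exact Hz2].
      intros j i Hi. unfold upd. destruct (Nat.eqb_spec i K); [contradiction|].
      rewrite Bool.andb_false_r. auto.
Qed.

Lemma stepK m' n D K z : 1 <= (INR n - 1) * (2/3)^m' -> good D -> (1 <= K)%nat ->
  lo (S m') D (fun _ => K) n <= z <= hi (S m') D (fun _ => K) n ->
  exists D', good D' /\ (forall j i, i <> K -> D' j i = D j i) /\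
    lo (S m') D' (fun _ => S K) n <= z <= hi (S m') D' (fun _ => S K) n.
Proof.
  intros Hn HD HK Hz. destruct (stepP m' n D K z Hn HD HK Hz n (le_n n)) as [D' [H1 [H2 H3]]].
  exists D'. split; [auto|]. split; [auto|].
  unfold lo, hi in *.
  rewrite (sumn_ext n (fun j => psum (D' j) (S K) ^ S m') (fun j => psum (D' j) (levp K n j) ^ S m')).
  rewrite (sumn_ext n (fun j => (psum (D' j) (S K) + / 3 ^ S K) ^ S m')
    (fun j => (psum (D' j) (levp K n j) + / 3 ^ levp K n j) ^ S m')).
  exact H3.
  all: intros j Hj; unfold levp; destruct (Nat.ltb_spec j n); [reflexivity|lia].
Qed.

Lemma sumf_psum d N : sum_f_R0 (fun i => d i / 3 ^ (S i)) N = psum d (S N).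
Proof.
  induction N.
  - simpl sum_f_R0; cbn [psum]; simpl; unfold Rdiv; ring.
  - change (sum_f_R0 (fun i => d i / 3 ^ S i) (S N)) with
      (sum_f_R0 (fun i => d i / 3 ^ S i) N + d (S N) / 3 ^ S (S N)).
    rewrite IHN. reflexivity.
Qed.

Lemma cv_le u x B : Un_cv u x -> (forall N, u N <= B) -> x <= B.
Proof.
  intros Hu HB. destruct (Rle_dec x B) as [|Hn]; [auto|]. apply Rnot_le_lt in Hn.
  destruct (Hu (x - B) ltac:(lra)) as [N HN]. specialize (HN N (le_n N)).
  specialize (HB N). unfold Rdist in HN. apply Rabs_def2 in HN. lra.
Qed.

Lemma cantor_lim d (Hd : digits d) : {x | Un_cv (fun N => sum_f_R0 (fun i => d i / 3 ^ (S i)) N) x /\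
   forall k, psum d k <= x <= psum d k + / 3 ^ k}.
Proof.
  set (u := fun N => sum_f_R0 (fun i => d i / 3 ^ (S i)) N).
  assert (Hg : Un_growing u).
  { intros N. unfold u. rewrite !sumf_psum. apply psum_mono; auto. }
  assert (Hb : has_ub u).
  { exists 1. intros y [i ->]. unfold u. rewrite sumf_psum.
    pose proof (psum_le1 d Hd (S i)). pose proof (inv3_pos (S i)). lra. }
  destruct (growing_cv u Hg Hb) as [x Hx]. exists x. split; [exact Hx|].
  intros k. split.
  - pose proof (growing_ineq u x Hg Hx k). unfold u in H. rewrite sumf_psum in H.
    pose proof (psum_mono d Hd k (S k) ltac:(lia)). lra.
  - apply (cv_le u x); [exact Hx|]. intros N. unfold u. rewrite sumf_psum.
    pose proof (inv3_pos k). pose proof (inv3_pos (S N)).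
    destruct (Nat.le_gt_cases (S N) k).
    + pose proof (psum_mono d Hd (S N) k H1). lra.
    + pose proof (psum_h_mono d Hd k (S N) ltac:(lia)). lra.
Qed.

Lemma main_cons m' n z : 1 <= (INR n - 1) * (2/3)^m' ->
  INR n * (2/3)^(S m') <= z <= INR n ->
  sumset n (cantor_pow (S m')) z.
Proof.
  intros Hn Hz. set (m := S m').
  set (Inv := fun k D => good D /\ lo m D (fun _ => S k) n <= z <= hi m D (fun _ => S k) n).
  assert (Hst : forall k D, exists D', Inv k D -> Inv (S k) D' /\ (forall j i, i <> S k -> D' j i = D j i)).
  { intros k D. destruct (classic (Inv k D)) as [HI|HI].
    - destruct HI as [HD Hz1].
      destruct (stepK m' n D (S k) z Hn HD ltac:(lia) Hz1) as [D' [H1 [H2 H3]]].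
      exists D'. intros _. split; [split; auto|auto].
    - exists D. intros H. contradiction. }
  set (F := fun k D => proj1_sig (constructive_indefinite_description _ (Hst k D))).
  assert (HF : forall k D, Inv k D -> Inv (S k) (F k D) /\ (forall j i, i <> S k -> F k D j i = D j i)).
  { intros k D. unfold F. destruct (constructive_indefinite_description _ (Hst k D)) as [D' HD']. exact HD'. }
  set (D0 := fun (_ _ : nat) => 2).
  set (Ds := fun k => nat_rect (fun _ => nat -> nat -> R) D0 (fun k Dk => F k Dk) k).
  assert (HDsS : forall k, Ds (S k) = F k (Ds k)) by reflexivity.
  assert (HInv : forall k, Inv k (Ds k)).
  { induction k.
    - split.
      + split; [intros j i; right; reflexivity | intros j; reflexivity].
      + assert (E : forall j, psum (Ds 0%nat j) 1 = 2/3)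
          by (intros; cbn [psum]; unfold Ds, D0; simpl; field).
        unfold lo, hi. cbv beta.
        rewrite (sumn_ext n (fun j => psum (Ds 0%nat j) 1 ^ m) (fun _ => (2/3)^m))
          by (intros; rewrite E; reflexivity).
        rewrite (sumn_ext n (fun j => (psum (Ds 0%nat j) 1 + / 3 ^ 1) ^ m) (fun _ => 1)).
        2:{ intros. rewrite E. replace (2/3 + / 3 ^ 1) with 1 by (simpl; field).
            apply pow1. }
        rewrite !sumn_const. split; [exact (proj1 Hz)|]. lra.
    - rewrite HDsS. apply HF, IHk. }
  assert (Hag : forall i k, (i <= k)%nat -> forall j, Ds k j i = Ds i j i).
  { intros i k Hik. induction Hik; intros j; [reflexivity|].
    rewrite HDsS. rewrite (proj2 (HF m0 (Ds m0) (HInv m0))) by lia. apply IHHik. }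
  set (dfin := fun j i => Ds i j i).
  assert (Hdig : forall j, digits (dfin j)).
  { intros j i. unfold dfin. destruct (HInv i) as [[H1 _] _]. apply H1. }
  assert (Hps : forall k j, psum (dfin j) (S k) = psum (Ds k j) (S k)).
  { intros k j. apply psum_ext. intros i Hi. unfold dfin. symmetry. apply Hag. lia. }
  set (X := fun j => proj1_sig (cantor_lim (dfin j) (Hdig j))).
  assert (HX : forall j, Un_cv (fun N => sum_f_R0 (fun i => dfin j i / 3 ^ (S i)) N) (X j) /\
     forall k, psum (dfin j) k <= X j <= psum (dfin j) k + / 3 ^ k).
  { intros j. unfold X. destruct (cantor_lim (dfin j) (Hdig j)) as [x Hx]. exact Hx. }
  set (Ssum := sumn (fun j => X j ^ m) n).
  assert (Hbound : forall k, Rabs (z - Ssum) <= INR n * INR m * / 3 ^ (S k)).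
  { intros k. destruct (HInv k) as [[HD1 HD2] [Hlo Hhi]].
    assert (B1 : lo m (Ds k) (fun _ => S k) n <= Ssum).
    { apply sumn_le. intros j _. apply pow_incr. split.
      - apply (psum_mono _ (HD1 j) 0 (S k)). lia.
      - rewrite <- Hps. apply HX. }
    assert (B2 : Ssum <= hi m (Ds k) (fun _ => S k) n).
    { apply sumn_le. intros j _. apply pow_incr. split.
      - pose proof (HX j) as [_ Hk]. specialize (Hk 0%nat). simpl in Hk.
        pose proof (psum_mono _ (Hdig j) 0 0 (le_n 0)). simpl in H. lra.
      - rewrite <- Hps. apply HX. }
    assert (B3 : hi m (Ds k) (fun _ => S k) n - lo m (Ds k) (fun _ => S k) n
                 <= INR n * (INR m * / 3 ^ (S k))).
    { unfold hi, lo. rewrite <- sumn_minus, <- sumn_const. apply sumn_le. intros j _.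
      apply pd_upper.
      - apply (psum_mono _ (HD1 j) 0 (S k)). lia.
      - left; apply inv3_pos.
      - apply psum_le1, HD1. }
    apply Rabs_le. split; nra. }
  assert (Heq : z = Ssum).
  { destruct (Req_dec z Ssum) as [|Hne]; [auto|exfalso].
    assert (HE : 0 < Rabs (z - Ssum)) by (apply Rabs_pos_lt; lra).
    set (C := INR n * INR m). assert (HC : 0 <= C) by (apply Rmult_le_pos; apply pos_INR).
    destruct (pow_lt_1_zero (/3) ltac:(rewrite Rabs_pos_eq; lra) (Rabs (z - Ssum) / (C + 1)))
      as [N HN].
    { apply Rdiv_lt_0_compat; lra. }
    specialize (HN N (le_n N)). rewrite Rabs_pos_eq in HN by (apply pow_le; lra).
    rewrite pow_inv in HN.
    specialize (Hbound N). rewrite inv3_S in Hbound. fold C in Hbound.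
    pose proof (inv3_pos N).
    apply (Rmult_lt_compat_l (C+1)) in HN; [|lra].
    replace ((C + 1) * (Rabs (z - Ssum) / (C + 1))) with (Rabs (z - Ssum)) in HN by (field; lra).
    nra. }
  exists (map (fun j => X j ^ m) (seq 0 n)). split; [|split].
  - rewrite length_map, length_seq. reflexivity.
  - apply Forall_forall. intros y Hy. apply in_map_iff in Hy. destruct Hy as [j [<- _]].
    exists (X j). split; [|reflexivity]. exists (dfin j). split; [apply Hdig|apply HX].
  - rewrite fold_sumn. symmetry. exact Heq.
Qed.

Lemma kk1 k : 0 <= INR k * (INR k - 1).
Proof.
  destruct k; [simpl; lra|]. pose proof (pos_INR k). rewrite S_INR. nra.
Qed.

Lemma pow32_bern k : 1 + INR k / 2 + INR k * (INR k - 1) / 8 <= (3/2)^k.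
Proof.
  induction k; [simpl; lra|].
  replace ((3/2)^(S k)) with (3/2 * (3/2)^k) by reflexivity.
  pose proof (kk1 k). pose proof (pos_INR k). rewrite S_INR. nra.
Qed.

Lemma pow32_gt k : INR k < (3/2)^k.
Proof. pose proof (pow32_bern k). pose proof (pos_INR k). pose proof (Rle_0_sqr (INR k - 5/2)). unfold Rsqr in *. nra. Qed.

Theorem theorem3 (m : nat) (hm : (1 <= m)%nat) :
  (forall z : R,
     INR (m + 1) * (2/3) ^ m + INR (m - 1) <= z <=
     INR (m - 1) * (2/3) ^ m + INR (m + 1) ->
     sumset (t_m m) (cantor_pow m) z) /\
  (INR (m - 1) * (2/3) ^ m + INR (m + 1)) - (INR (m + 1) * (2/3) ^ m + INR (m - 1))
    = 2 * (1 - (2/3) ^ m).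
Proof.
  destruct m as [|m']; [lia|].
  replace (S m' - 1)%nat with m' by lia.
  assert (E1 : INR (S m' + 1) = INR m' + 2) by (rewrite plus_INR, S_INR; simpl; ring).
  rewrite E1. split; [|ring].
  intros z Hz. unfold t_m. replace (S m' - 1)%nat with m' by lia.
  set (s := (3/2)^m').
  set (r := (2/3)^m').
  assert (Hs1 : 1 <= s) by (apply pow_R1_Rle; lra).
  assert (Hsr : s * r = 1).
  { unfold s, r. rewrite <- Rpow_mult_distr. replace (3/2*(2/3)) with 1 by field. apply pow1. }
  assert (Hr : 0 < r) by (apply pow_lt; lra).
  set (c := Z.to_nat (ceilR s)).
  assert (Hc : s <= INR c < s + 1).
  { unfold c, ceilR. destruct (base_Int_part (- s)) as [A B].
    assert (P : (0 < - Int_part (- s))%Z) by (apply lt_0_IZR; rewrite opp_IZR; lra).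
    rewrite INR_IZR_INZ, Z2Nat.id by lia. rewrite opp_IZR. lra. }
  assert (Hcm : (m' < c)%nat).
  { apply INR_lt. pose proof (pow32_gt m'). fold s in H. lra. }
  assert (Hcm' : INR m' + 1 <= INR c).
  { rewrite <- S_INR. apply le_INR. lia. }
  assert (Hq : (2/3)^(S m') = 2/3 * r) by reflexivity.
  rewrite Hq in Hz.
  apply main_cons.
  - rewrite mult_INR. simpl (INR 2). fold r. assert (0 <= (INR c - 1) * r) by (apply Rmult_le_pos; lra). assert (0 <= (INR c - s) * r) by (apply Rmult_le_pos; lra). nra.
  - rewrite Hq, mult_INR. simpl (INR 2). split; [|nra].
    destruct m' as [|[|m'']].
    + assert (c = 1%nat).
      { unfold s in Hc. simpl in Hc. assert (INR c < INR 2) by (simpl; lra).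
        apply INR_lt in H. lia. }
      rewrite H. simpl INR in *. unfold r in *. simpl in *. lra.
    + unfold r, s in *. simpl in *. nra.
    + pose proof (pos_INR m''). rewrite !S_INR in Hz. nra.
Qed.
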